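(* Let $N\ge2$, $\gamma\in(\tfrac12,\tfrac32)$, and let $\Gamma$ satisfy (A1) and (A2) with constant $C_1>0$. Let $\delta\ge0$ and $\alpha\ge 2\gamma$, and take the communication weight $\psi_\delta(s)=(s-\delta)^{-\alpha}$ for $s>\delta$. Suppose the initial data satisfy $|x_{i0}-x_{j0}|>\delta$ for all $1\le i\ne j\le N$. Then for any global smooth solution $(x(t),v(t))$ of the NL CS system with weight $\psi_\delta$ we have $T_0=\infty$. Moreover, for all $t\in[0,T_0)$: (i) if $\alpha=2\gamma$, $$\mathcal{L}^0(t)+\frac{1}{2C_1\gamma(N-1)}\sum_i|v_i(t)|^2\le\frac{2\gamma-1}{2\gamma}\,t+\mathcal{L}^0(0)+\frac{1}{2C_1\gamma(N-1)}\sum_i|v_{i0}|^2;$$ (ii) if $\alpha>2\gamma$, then with $\beta=\frac{\alpha}{2\gamma}-1$, $$\mathcal{L}^\beta(t)+\frac{\beta}{2C_1\gamma(N-1)}\sum_i|v_i(t)|^2\le\frac{(2\gamma-1)\beta}{2\gamma}\,t+\mathcal{L}^\beta(0)+\frac{\beta}{2C_1\gamma(N-1)}\sum_i|v_{i0}|^2.$$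
   Context: The NL CS system: $\frac{d}{dt}x_i=v_i$, $\frac{d}{dt}v_i=\frac1N\sum_{j=1}^N\psi(|x_i-x_j|)\Gamma(v_j-v_i)$, $i=1,\dots,N$, with $x_i,v_i\in\mathbb{R}^d$, initial data $(x_{i0},v_{i0})$, here with $\psi=\psi_\delta$. (A1): $\Gamma(-v)=-\Gamma(v)$ for all $v\in\mathbb{R}^d$. (A2): $\langle\Gamma(v),v\rangle\ge C_1|v|^{2\gamma}$ for all $v\in\mathbb{R}^d$. Sums $\sum_i$ run over $1\le i\le N$, and $\sum_{i\ne j}$ over all ordered pairs with $i\ne j$. For a configuration with $|x_i-x_j|>\delta$ for all $i\ne j$, define for $\beta>0$ $$\mathcal{L}^\beta(t)=\frac{1}{N(N-1)}\sum_{i\ne j}\big(|x_i(t)-x_j(t)|-\delta\big)^{-\beta},\qquad \mathcal{L}^0(t)=\frac{1}{N(N-1)}\sum_{i\ne j}\log\big(|x_i(t)-x_j(t)|-\delta\big).$$ A collision at time $t$ means $|x_i(t)-x_j(t)|\le\delta$ for some $i\ne j$. The maximal collisionless life-span is $T_0:=\sup\{s\ge0:\ \text{no solution of the system with the given data has a collision on }[0,s)\}$. *)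

(* Defs.v *)
From Stdlib Require Import Reals Lra Lia.
Open Scope R_scope.

(* A vector of R^d is represented by its coordinate function nat -> R;
   only the coordinates k < d are meaningful. *)
Definition Vec := nat -> R.

Fixpoint fsum (n : nat) (f : nat -> R) : R :=
  match n with
  | O => 0
  | S m => fsum m f + f m
  end.

Definition dot (d : nat) (u w : Vec) : R := fsum d (fun k => u k * w k).
Definition norm (d : nat) (u : Vec) : R := sqrt (dot d u u).
Definition dist (d : nat) (u w : Vec) : R := norm d (fun k => u k - w k).

(* real power s^p for s >= 0 and p > 0 (with 0^p = 0) *)
Definition powR (s p : R) : R :=
  if Rlt_dec 0 s then Rpower s p else 0.

(* Gamma is a genuine map R^d -> R^d: its meaningful coordinates
   depend only on the meaningful coordinates of its argument. *)
Definition Gamma_on_Rd (d : nat) (Gamma : Vec -> Vec) : Prop :=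
  forall w w' : Vec, (forall k, (k < d)%nat -> w k = w' k) ->
  forall k, (k < d)%nat -> Gamma w k = Gamma w' k.

Definition CS_A1 (d : nat) (Gamma : Vec -> Vec) : Prop :=
  forall (w : Vec) k, (k < d)%nat -> Gamma (fun l => - w l) k = - Gamma w k.

Definition CS_A2 (d : nat) (Gamma : Vec -> Vec) (gamma C1 : R) : Prop :=
  forall w : Vec, dot d (Gamma w) w >= C1 * powR (norm d w) (2 * gamma).

Definition psi_delta (delta alpha s : R) : R := Rpower (s - delta) (- alpha).

Definition collisionless (N d : nat) (delta : R) (X : nat -> Vec) : Prop :=
  forall i j, (i < N)%nat -> (j < N)%nat -> i <> j -> dist d (X i) (X j) > delta.

Definition right_continuous_at (f : R -> R) (t0 : R) : Prop :=
  forall eps, 0 < eps -> exists del, 0 < del /\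
    forall s, t0 <= s < t0 + del -> Rabs (f s - f t0) < eps.

(* (x, v) : time -> particle -> Vec is a global solution on [0, oo) of the
   NL CS system with weight psi_delta: x, v are continuous on [0,oo)
   (right-continuous at 0), and at every time t > 0 at which the
   configuration is collisionless (so that psi_delta is defined) they are
   differentiable and satisfy the ODEs. *)
Definition CS_solution (N d : nat) (delta alpha : R) (Gamma : Vec -> Vec)
    (x v : R -> nat -> Vec) : Prop :=
  (forall i k, (i < N)%nat -> (k < d)%nat ->
     right_continuous_at (fun s => x s i k) 0 /\
     right_continuous_at (fun s => v s i k) 0 /\
     (forall t, 0 < t -> continuity_pt (fun s => x s i k) t /\
                         continuity_pt (fun s => v s i k) t)) /\
  (forall t i k, 0 < t -> collisionless N d delta (x t) ->
     (i < N)%nat -> (k < d)%nat ->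
     derivable_pt_lim (fun s => x s i k) t (v t i k) /\
     derivable_pt_lim (fun s => v s i k) t
       (/ INR N * fsum N (fun j =>
          if Nat.eq_dec j i then 0 else
          psi_delta delta alpha (dist d (x t i) (x t j)) *
          Gamma (fun l => v t j l - v t i l) k))).

Definition Lbeta (N d : nat) (delta beta : R) (X : nat -> Vec) : R :=
  / (INR N * INR (N - 1)) *
  fsum N (fun i => fsum N (fun j =>
    if Nat.eq_dec i j then 0 else Rpower (dist d (X i) (X j) - delta) (- beta))).

Definition L0 (N d : nat) (delta : R) (X : nat -> Vec) : R :=
  / (INR N * INR (N - 1)) *
  fsum N (fun i => fsum N (fun j =>
    if Nat.eq_dec i j then 0 else ln (dist d (X i) (X j) - delta))).

Definition kinetic (N d : nat) (V : nat -> Vec) : R :=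
  fsum N (fun i => norm d (V i) ^ 2).

(* Main.v *)
Require Import Defs.
From Stdlib Require Import Reals.
From Stdlib Require Import Lra Lia Arith FunctionalExtensionality Classical.
Open Scope R_scope.


Lemma fsum_ext n f g : (forall k, (k < n)%nat -> f k = g k) -> fsum n f = fsum n g.
Proof. induction n; simpl; intros H; auto. rewrite IHn by (intros; apply H; lia). rewrite H by lia. auto. Qed.

Lemma fsum_plus n f g : fsum n (fun k => f k + g k) = fsum n f + fsum n g.
Proof. induction n; simpl; [lra|]. rewrite IHn; lra. Qed.

Lemma fsum_scal n c f : fsum n (fun k => c * f k) = c * fsum n f.
Proof. induction n; simpl; [lra|]. rewrite IHn; lra. Qed.

Lemma fsum_le n f g : (forall k, (k < n)%nat -> f k <= g k) -> fsum n f <= fsum n g.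
Proof. induction n; simpl; intros H; [lra|]. assert (f n <= g n) by (apply H; lia).
 assert (fsum n f <= fsum n g) by (apply IHn; intros; apply H; lia). lra. Qed.

Lemma fsum_nonneg n f : (forall k, (k < n)%nat -> 0 <= f k) -> 0 <= fsum n f.
Proof. intros H. replace 0 with (fsum n (fun _ => 0)). apply fsum_le; auto.
 induction n; simpl; auto. rewrite IHn; [lra|]. intros; apply H; lia. Qed.

Lemma fsum_term n f i : (forall k, (k < n)%nat -> 0 <= f k) -> (i < n)%nat -> f i <= fsum n f.
Proof. induction n; simpl; intros H Hi; [lia|].
 destruct (Nat.eq_dec i n).
 - subst. assert (0 <= fsum n f) by (apply fsum_nonneg; intros; apply H; lia). lra.
 - assert (f i <= fsum n f) by (apply IHn; [intros; apply H; lia| lia]).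
   assert (0 <= f n) by (apply H; lia). lra. Qed.

Lemma fsum_swap n m F : fsum n (fun i => fsum m (fun j => F i j)) = fsum m (fun j => fsum n (fun i => F i j)).
Proof. induction n; simpl.
 - induction m; simpl; auto. rewrite <- IHm; lra.
 - rewrite IHn. rewrite <- fsum_plus. reflexivity. Qed.

Lemma fsum_offdiag n i c : (i < n)%nat ->
  fsum n (fun j => if Nat.eq_dec i j then 0 else c) = INR (n - 1) * c.
Proof.
 assert (G : forall n, fsum n (fun j => if Nat.eq_dec i j then 0 else c) =
    INR n * c - (if lt_dec i n then c else 0)).
 { induction n0; cbn [fsum]. { destruct (lt_dec i 0); [lia|simpl; lra]. }
   rewrite IHn0. destruct (Nat.eq_dec i n0).
   - subst. destruct (lt_dec n0 n0); [lia|]. destruct (lt_dec n0 (S n0)); [|lia].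
     rewrite ?S_INR. lra.
   - destruct (lt_dec i n0); destruct (lt_dec i (S n0)); try lia; rewrite ?S_INR; lra. }
 intros Hi. rewrite G. destruct (lt_dec i n); [|lia].
 rewrite minus_INR by lia. change (INR 1) with 1. lra. Qed.

Lemma fsum_const n a : fsum n (fun _ => a) = INR n * a.
Proof. induction n; cbn [fsum]; [simpl; lra|]. rewrite IHn, S_INR. lra. Qed.

Lemma fsum_count n c : fsum n (fun i => fsum n (fun j => if Nat.eq_dec i j then 0 else c))
  = INR n * INR (n - 1) * c.
Proof. rewrite (fsum_ext n _ (fun _ => INR (n-1) * c)).
 2:{ intros; apply fsum_offdiag; auto. }
 rewrite fsum_const. lra. Qed.


Lemma dot_nonneg d u : 0 <= dot d u u.
Proof. unfold dot. apply fsum_nonneg. intros; nra. Qed.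

Lemma dot_sym d u w : dot d u w = dot d w u.
Proof. unfold dot. apply fsum_ext. intros; ring. Qed.

Lemma norm_nonneg d u : 0 <= norm d u.
Proof. unfold norm. apply sqrt_pos. Qed.

Lemma norm_sq d u : norm d u ^ 2 = dot d u u.
Proof. unfold norm. rewrite pow2_sqrt; auto using dot_nonneg. Qed.

Lemma dot_quad d u w l : dot d (fun k => u k - l * w k) (fun k => u k - l * w k)
  = dot d u u - 2 * l * dot d u w + l^2 * dot d w w.
Proof. unfold dot.
  rewrite (fsum_ext d _ (fun k => (u k * u k + (-2 * l) * (u k * w k)) + l^2 * (w k * w k)))
   by (intros; ring).
  rewrite !fsum_plus, !fsum_scal. ring. Qed.

Lemma cauchy_schwarz d u w : Rabs (dot d u w) <= norm d u * norm d w.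
Proof.
  set (a := dot d u u). set (b := dot d w w). set (c := dot d u w).
  assert (Ha : 0 <= a) by apply dot_nonneg. assert (Hb : 0 <= b) by apply dot_nonneg.
  assert (Q : forall l, 0 <= a - 2 * l * c + l^2 * b).
  { intros l. unfold a, b, c. rewrite <- dot_quad. apply dot_nonneg. }
  assert (Hc : c^2 <= a * b).
  { destruct (Req_dec b 0) as [Hb0|Hb0].
    - destruct (Req_dec c 0) as [Hc0|Hc0]. { rewrite Hc0, Hb0. lra. }
      exfalso. specialize (Q ((a+1)/(2*c))). rewrite Hb0 in Q.
      replace (a - 2 * ((a + 1) / (2 * c)) * c + ((a + 1) / (2 * c)) ^ 2 * 0) with (-1) in Q
        by (field; auto). lra.
    - specialize (Q (c / b)).
      replace (a - 2 * (c / b) * c + (c / b) ^ 2 * b) with ((a * b - c^2)/b) in Q by (field; auto).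
      assert (0 < b) by lra.
      apply Rmult_le_compat_r with (r := b) in Q; [|lra].
      replace ((a * b - c ^ 2) / b * b) with (a*b - c^2) in Q by (field; lra). lra. }
  unfold norm. fold a b. rewrite <- sqrt_mult by auto.
  rewrite <- sqrt_Rsqr_abs. apply sqrt_le_1_alt. unfold Rsqr. lra.
Qed.

Lemma norm_opp d u w : norm d (fun k => u k - w k) = norm d (fun k => w k - u k).
Proof. unfold norm, dot. f_equal. apply fsum_ext; intros; ring. Qed.

Lemma dist_sym d u w : Defs.dist d u w = Defs.dist d w u.
Proof. unfold Defs.dist. apply norm_opp. Qed.

Lemma D_ext f g t l : (forall s, f s = g s) -> derivable_pt_lim f t l -> derivable_pt_lim g t l.
Proof. intros H. replace g with f; auto. apply functional_extensionality; auto. Qed.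

Lemma D_eql f t l l' : l = l' -> derivable_pt_lim f t l -> derivable_pt_lim f t l'.
Proof. intros ->; auto. Qed.

Lemma D_plus f g t l m : derivable_pt_lim f t l -> derivable_pt_lim g t m ->
  derivable_pt_lim (fun s => f s + g s) t (l + m).
Proof. intros. apply (derivable_pt_lim_plus f g); auto. Qed.

Lemma D_minus f g t l m : derivable_pt_lim f t l -> derivable_pt_lim g t m ->
  derivable_pt_lim (fun s => f s - g s) t (l - m).
Proof. intros. apply (derivable_pt_lim_minus f g); auto. Qed.

Lemma D_mul f g t l m : derivable_pt_lim f t l -> derivable_pt_lim g t m ->
  derivable_pt_lim (fun s => f s * g s) t (l * g t + f t * m).
Proof. intros. apply (derivable_pt_lim_mult f g); auto. Qed.

Lemma D_const c t : derivable_pt_lim (fun _ => c) t 0.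
Proof. apply derivable_pt_lim_const. Qed.

Lemma D_cmul c f t l : derivable_pt_lim f t l -> derivable_pt_lim (fun s => c * f s) t (c * l).
Proof. intros H. apply (D_eql _ _ (0 * f t + c * l)); [ring|]. apply D_mul; auto. apply D_const. Qed.

Lemma D_comp f g t l m : derivable_pt_lim f t l -> derivable_pt_lim g (f t) m ->
  derivable_pt_lim (fun s => g (f s)) t (m * l).
Proof. intros. apply (derivable_pt_lim_comp f g); auto. Qed.

Lemma D_fsum n F D t : (forall m, (m < n)%nat -> derivable_pt_lim (fun s => F s m) t (D m)) ->
  derivable_pt_lim (fun s => fsum n (F s)) t (fsum n D).
Proof. induction n; cbn [fsum]; intros H. apply D_const.
  apply D_plus. apply IHn; intros; apply H; lia. apply H; lia. Qed.

Lemma C_plus f g t : continuity_pt f t -> continuity_pt g t -> continuity_pt (fun s => f s + g s) t.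
Proof. intros. apply (continuity_pt_plus f g); auto. Qed.
Lemma C_minus f g t : continuity_pt f t -> continuity_pt g t -> continuity_pt (fun s => f s - g s) t.
Proof. intros. apply (continuity_pt_minus f g); auto. Qed.
Lemma C_mul f g t : continuity_pt f t -> continuity_pt g t -> continuity_pt (fun s => f s * g s) t.
Proof. intros. apply (continuity_pt_mult f g); auto. Qed.
Lemma C_const c t : continuity_pt (fun _ => c) t.
Proof. apply continuity_pt_const. intros a b; auto. Qed.
Lemma C_comp f g t : continuity_pt f t -> continuity_pt g (f t) -> continuity_pt (fun s => g (f s)) t.
Proof. intros. apply (continuity_pt_comp f g); auto. Qed.
Lemma C_fsum n F t : (forall m, (m < n)%nat -> continuity_pt (fun s => F s m) t) ->
  continuity_pt (fun s => fsum n (F s)) t.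
Proof. induction n; cbn [fsum]; intros H. apply C_const.
  apply C_plus. apply IHn; intros; apply H; lia. apply H; lia. Qed.


Lemma Rpower_one_l p : Rpower 1 p = 1.
Proof. unfold Rpower. rewrite ln_1, Rmult_0_r. apply exp_0. Qed.

Lemma Rpower_pos x p : 0 < Rpower x p.
Proof. unfold Rpower. apply exp_pos. Qed.

Lemma young_pos a p : 0 < a -> 1 < p -> p * a <= Rpower a p + (p - 1).
Proof.
  intros Ha Hp.
  set (h := fun c => Rpower c p - p * c + p - 1).
  set (h' := fun c => p * Rpower c (p - 1) - p * 1).
  assert (Dh : forall c, 0 < c -> derivable_pt_lim h c (h' c)).
  { intros c Hc. unfold h, h'.
    apply (D_eql _ _ ((p * Rpower c (p - 1) - p * 1) + 0 - 0)); [ring|].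
    apply D_minus; [apply D_plus|apply D_const].
    apply D_minus. apply derivable_pt_lim_power; auto.
    apply D_cmul. apply derivable_pt_lim_id. apply D_const. }
  assert (h1 : h 1 = 0) by (unfold h; rewrite Rpower_one_l; ring).
  assert (0 <= h a).
  { destruct (Rtotal_order a 1) as [Hlt|[Heq|Hgt]].
    - destruct (MVT_cor2 h h' a 1 Hlt) as [c [Hc Hc']].
      { intros c Hc. apply Dh. lra. }
      assert (Rpower c (p-1) < Rpower 1 (p-1)) by (apply Rlt_Rpower_l; lra).
      rewrite Rpower_one_l in H. unfold h' in Hc.
      assert ((p * Rpower c (p - 1) - p * 1) * (1 - a) <= 0).
      { assert (p * Rpower c (p - 1) - p * 1 < 0) by nra. assert (0 < 1 - a) by lra. set (z := p * Rpower c (p - 1) - p * 1) in *. nra. }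
      lra.
    - subst; lra.
    - destruct (MVT_cor2 h h' 1 a Hgt) as [c [Hc Hc']].
      { intros c Hc. apply Dh. lra. }
      assert (Rpower 1 (p-1) < Rpower c (p-1)) by (apply Rlt_Rpower_l; lra).
      rewrite Rpower_one_l in H. unfold h' in Hc.
      assert (0 <= (p * Rpower c (p - 1) - p * 1) * (a - 1)).
      { apply Rmult_le_pos; nra. }
      lra. }
  unfold h in H. lra.
Qed.

Lemma young a p : 0 <= a -> 1 < p -> a <= / p * powR a p + (p - 1) / p.
Proof.
  intros Ha Hp. unfold powR. destruct (Rlt_dec 0 a).
  - pose proof (young_pos a p r Hp).
    apply Rmult_le_reg_l with p; [lra|].
    replace (p * (/ p * Rpower a p + (p - 1) / p)) with (Rpower a p + (p-1)) by (field; lra). lra.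
  - assert (a = 0) by lra. subst. apply Rle_trans with ((p-1)/p); [|lra].
    unfold Rdiv. apply Rmult_le_pos; [lra|]. left; apply Rinv_0_lt_compat; lra.
Qed.

Lemma young_sw s w p q : 0 < s -> 0 <= w -> 1 < p ->
  Rpower s (-q) * w <= / p * (Rpower s (- (p * q)) * powR w p) + (p - 1) / p.
Proof.
  intros Hs Hw Hp.
  assert (E : powR (Rpower s (-q) * w) p = Rpower s (- (p * q)) * powR w p).
  { unfold powR. destruct (Rlt_dec 0 w).
    - destruct (Rlt_dec 0 (Rpower s (- q) * w)).
      + rewrite <- Rpower_mult_distr by (auto using Rpower_pos). rewrite Rpower_mult.
        f_equal. f_equal. ring.
      + exfalso. apply n. apply Rmult_lt_0_compat; auto using Rpower_pos.
    - assert (w = 0) by lra. subst. rewrite Rmult_0_r.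
      destruct (Rlt_dec 0 0); [lra|]. ring. }
  rewrite <- E. apply young; auto.
  apply Rmult_le_pos; auto. left; apply Rpower_pos.
Qed.


Definition acc N d delta alpha (Gamma : Vec -> Vec) (X V : nat -> Vec) i k :=
  / INR N * fsum N (fun j => if Nat.eq_dec j i then 0 else
     psi_delta delta alpha (Defs.dist d (X i) (X j)) * Gamma (fun l => V j l - V i l) k).

Definition rdot d (X V : nat -> Vec) i j :=
  dot d (fun k => X i k - X j k) (fun k => V i k - V j k) / Defs.dist d (X i) (X j).

Lemma kin_sym N d delta alpha Gamma X V :
  Gamma_on_Rd d Gamma -> CS_A1 d Gamma ->
  fsum N (fun i => fsum d (fun k => acc N d delta alpha Gamma X V i k * V i k + V i k * acc N d delta alpha Gamma X V i k))
  = - / INR N * fsum N (fun i => fsum N (fun j => if Nat.eq_dec i j then 0 else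
      psi_delta delta alpha (Defs.dist d (X i) (X j)) *
      dot d (Gamma (fun l => V j l - V i l)) (fun l => V j l - V i l))).
Proof.
  intros HR HA1.
  set (G := fun i j k => Gamma (fun l => V j l - V i l) k).
  set (ps := fun i j => psi_delta delta alpha (Defs.dist d (X i) (X j))).
  set (H := fun i j => if Nat.eq_dec i j then 0 else ps i j * fsum d (fun k => V i k * G i j k)).
  assert (S1 : forall i, fsum d (fun k => acc N d delta alpha Gamma X V i k * V i k + V i k * acc N d delta alpha Gamma X V i k)
      = 2 * / INR N * fsum N (fun j => H i j)).
  { intros i. unfold acc.
    rewrite (fsum_ext d _ (fun k => 2 * / INR N * fsum N (fun j => V i k *
       (if Nat.eq_dec j i then 0 else ps i j * G i j k)))).
    2:{ intros k _. rewrite fsum_scal. unfold ps, G. ring. }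
    rewrite fsum_scal. f_equal. rewrite fsum_swap. apply fsum_ext. intros j _.
    unfold H. destruct (Nat.eq_dec j i); destruct (Nat.eq_dec i j); try lia.
    - rewrite (fsum_ext d _ (fun _ => 0 * 0)) by (intros; ring). rewrite fsum_scal. ring.
    - rewrite <- fsum_scal. apply fsum_ext. intros; ring. }
  rewrite (fsum_ext N _ _ (fun i _ => S1 i)). rewrite fsum_scal.
  assert (S2 : fsum N (fun i => fsum N (fun j => H i j)) = fsum N (fun i => fsum N (fun j => H j i))).
  { apply fsum_swap. }
  assert (S3 : forall i j, (i < N)%nat -> (j < N)%nat -> H i j + H j i =
    - (if Nat.eq_dec i j then 0 else ps i j * dot d (Gamma (fun l => V j l - V i l)) (fun l => V j l - V i l))).
  { intros i j _ _. unfold H. destruct (Nat.eq_dec i j); destruct (Nat.eq_dec j i); try lia. ring.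
    assert (Ps : ps j i = ps i j) by (unfold ps; rewrite dist_sym; auto). rewrite Ps.
    unfold dot. rewrite <- Rmult_plus_distr_l, <- fsum_plus.
    match goal with |- _ = - (?a * ?F) => replace (- (a * F)) with (a * (-1 * F)) by ring end.
    f_equal. rewrite <- (fsum_scal d (-1)).
    apply fsum_ext. intros k Hk. unfold G.
    assert (E1 : Gamma (fun l => V i l - V j l) k = Gamma (fun l => - (V j l - V i l)) k).
    { apply HR; auto. intros; ring. }
    rewrite E1, HA1 by auto. ring. }
  assert (S4 : 2 * fsum N (fun i => fsum N (fun j => H i j)) =
     - fsum N (fun i => fsum N (fun j => if Nat.eq_dec i j then 0 else ps i j * dot d (Gamma (fun l => V j l - V i l)) (fun l => V j l - V i l)))).
  { replace (2 * fsum N (fun i => fsum N (fun j => H i j))) with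
      (fsum N (fun i => fsum N (fun j => H i j)) + fsum N (fun i => fsum N (fun j => H j i))) by (rewrite <- S2; ring).
    rewrite <- fsum_plus. match goal with |- _ = - ?F => replace (- F) with (-1 * F) by ring end.
    rewrite <- fsum_scal.
    apply fsum_ext. intros i Hi. rewrite <- fsum_plus, <- fsum_scal. apply fsum_ext. intros j Hj.
    rewrite S3 by auto. ring. }
  unfold ps in S4. rewrite Rmult_assoc, (Rmult_comm (/ INR N)), <- Rmult_assoc, S4. ring.
Qed.

Lemma fsum2_lin N M p q F G :
  fsum N (fun i => fsum M (fun j => p * F i j + q * G i j)) =
  p * fsum N (fun i => fsum M (F i)) + q * fsum N (fun i => fsum M (G i)).
Proof.
  rewrite <- !fsum_scal, <- fsum_plus. apply fsum_ext. intros.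
  rewrite <- !fsum_scal, <- fsum_plus. auto. Qed.

Lemma rdot_bound d X V i j : 0 < Defs.dist d (X i) (X j) ->
  Rabs (rdot d X V i j) <= norm d (fun l => V j l - V i l).
Proof.
  intros Hr. unfold rdot, Rdiv. rewrite Rabs_mult, Rabs_inv. rewrite (Rabs_right (Defs.dist _ _ _)) by lra.
  apply Rmult_le_reg_r with (Defs.dist d (X i) (X j)); auto.
  rewrite Rmult_assoc, Rinv_l, Rmult_1_r by lra.
  rewrite <- norm_opp. unfold Defs.dist. rewrite Rmult_comm. apply cauchy_schwarz.
Qed.

Lemma Dbound N d gamma C1 delta alpha Gamma f' A B X V :
  (2 <= N)%nat -> Gamma_on_Rd d Gamma -> CS_A1 d Gamma -> 0 < C1 -> CS_A2 d Gamma gamma C1 ->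
  0 <= delta -> collisionless N d delta X -> 0 <= A ->
  (forall s w, 0 < s -> 0 <= w -> Rabs (f' s) * w <= A * (Rpower s (- alpha) * powR w (2 * gamma)) + B) ->
  / (INR N * INR (N - 1)) * fsum N (fun i => fsum N (fun j => if Nat.eq_dec i j then 0 else
      f' (Defs.dist d (X i) (X j) - delta) * rdot d X V i j))
  + A / (C1 * (INR N - 1)) * fsum N (fun i => fsum d (fun k =>
      acc N d delta alpha Gamma X V i k * V i k + V i k * acc N d delta alpha Gamma X V i k))
  <= B.
Proof.
  intros HN HR HA1 HC1 HA2 Hdel Hcol HA Hy.
  rewrite kin_sym by auto.
  assert (HN1 : INR (N - 1) = INR N - 1) by (rewrite minus_INR by lia; simpl; lra).
  assert (HNp : 2 <= INR N) by (apply (le_INR 2); auto).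
  set (K := / (INR N * INR (N - 1))).
  assert (HK : 0 < K) by (unfold K; apply Rinv_0_lt_compat; rewrite HN1; nra).
  set (c' := A / (C1 * (INR N - 1)) * / INR N).
  assert (Hc' : c' * C1 = K * A) by (unfold c', K; rewrite HN1; field; lra).
  assert (Hc'0 : 0 <= c').
  { unfold c'. apply Rmult_le_pos. unfold Rdiv. apply Rmult_le_pos; auto.
    left; apply Rinv_0_lt_compat; nra. left; apply Rinv_0_lt_compat; lra. }
  replace (K * _ + A / (C1 * (INR N - 1)) * _) with
   (fsum N (fun i => fsum N (fun j => K * (if Nat.eq_dec i j then 0 else
      f' (Defs.dist d (X i) (X j) - delta) * rdot d X V i j) + (- c') * (if Nat.eq_dec i j then 0 else
      psi_delta delta alpha (Defs.dist d (X i) (X j)) *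
      dot d (Gamma (fun l => V j l - V i l)) (fun l => V j l - V i l))))).
  2:{ rewrite fsum2_lin. unfold c'. ring. }
  apply Rle_trans with (fsum N (fun i => fsum N (fun j => if Nat.eq_dec i j then 0 else K * B))).
  2:{ rewrite fsum_count. unfold K. right. field. rewrite HN1; nra. }
  apply fsum_le. intros i Hi. apply fsum_le. intros j Hj.
  destruct (Nat.eq_dec i j) as [e|ne]; [lra|].
  assert (Hr : Defs.dist d (X i) (X j) > delta) by (apply Hcol; auto).
  set (s := Defs.dist d (X i) (X j) - delta).
  set (w := fun l => V j l - V i l).
  set (P := powR (norm d w) (2 * gamma)).
  set (ps := psi_delta delta alpha (Defs.dist d (X i) (X j))).
  assert (Hps : ps = Rpower s (- alpha)) by reflexivity.
  assert (Hps0 : 0 <= ps) by (rewrite Hps; left; apply Rpower_pos).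
  assert (B1 : f' s * rdot d X V i j <= A * (ps * P) + B).
  { apply Rle_trans with (Rabs (f' s) * norm d w).
    - apply Rle_trans with (Rabs (f' s * rdot d X V i j)). apply Rle_abs.
      rewrite Rabs_mult. apply Rmult_le_compat_l. apply Rabs_pos. apply rdot_bound. lra.
    - rewrite Hps. apply Hy. unfold s; lra. apply norm_nonneg. }
  assert (B2 : C1 * P <= dot d (Gamma w) w) by (apply Rge_le, HA2).
  assert (B3 : c' * (ps * (C1 * P)) <= c' * (ps * dot d (Gamma w) w)).
  { apply Rmult_le_compat_l; auto. apply Rmult_le_compat_l; auto. }
  fold s w. fold ps.
  replace (c' * (ps * (C1 * P))) with (K * A * (ps * P)) in B3 by (rewrite <- Hc'; ring).
  assert (K * (f' s * rdot d X V i j) <= K * (A * (ps * P) + B)) by (apply Rmult_le_compat_l; lra).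
  lra.
Qed.


Definition Lf N d delta (f : R -> R) (X : nat -> Vec) :=
  / (INR N * INR (N - 1)) * fsum N (fun i => fsum N (fun j =>
    if Nat.eq_dec i j then 0 else f (Defs.dist d (X i) (X j) - delta))).

Lemma D_dist N d (x v : R -> nat -> Vec) t i j :
  (forall i k, (i < N)%nat -> (k < d)%nat -> derivable_pt_lim (fun s => x s i k) t (v t i k)) ->
  (i < N)%nat -> (j < N)%nat -> 0 < Defs.dist d (x t i) (x t j) ->
  derivable_pt_lim (fun s => Defs.dist d (x s i) (x s j)) t (rdot d (x t) (v t) i j).
Proof.
  intros Hx Hi Hj Hr.
  unfold Defs.dist, norm in *.
  set (q := dot d (fun k => x t i k - x t j k) (fun k => x t i k - x t j k)) in *.
  assert (Hq : 0 < q).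
  { destruct (dot_nonneg d (fun k => x t i k - x t j k)) as [h|h]; auto.
    unfold q in Hr. rewrite <- h, sqrt_0 in Hr. lra. }
  apply (D_eql _ _ (/ (2 * sqrt q) * fsum d (fun k =>
     (v t i k - v t j k) * (x t i k - x t j k) + (x t i k - x t j k) * (v t i k - v t j k)))).
  2:{ apply (D_comp (fun s => dot d (fun k => x s i k - x s j k) (fun k => x s i k - x s j k)) sqrt).
      - unfold dot. apply D_fsum. intros k Hk. apply (D_mul (fun s => x s i k - x s j k) (fun s => x s i k - x s j k)); apply D_minus; apply Hx; auto.
      - apply derivable_pt_lim_sqrt. auto. }
  unfold rdot, Defs.dist, norm. fold q.
  rewrite (fsum_ext d _ (fun k => 2 * ((x t i k - x t j k) * (v t i k - v t j k)))) by (intros; ring).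
  rewrite fsum_scal. unfold dot. field. apply Rgt_not_eq. apply sqrt_lt_R0. auto.
Qed.

Lemma D_kin N d delta alpha Gamma (x v : R -> nat -> Vec) t :
  (forall i k, (i < N)%nat -> (k < d)%nat -> derivable_pt_lim (fun s => v s i k) t
      (acc N d delta alpha Gamma (x t) (v t) i k)) ->
  derivable_pt_lim (fun s => kinetic N d (v s)) t
    (fsum N (fun i => fsum d (fun k => acc N d delta alpha Gamma (x t) (v t) i k * v t i k
        + v t i k * acc N d delta alpha Gamma (x t) (v t) i k))).
Proof.
  intros Hv.
  apply (D_ext (fun s => fsum N (fun i => fsum d (fun k => v s i k * v s i k)))).
  { intros s. unfold kinetic. apply fsum_ext. intros. rewrite norm_sq. reflexivity. }
  apply D_fsum. intros i Hi. apply D_fsum. intros k Hk. apply D_mul; auto.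
Qed.

Lemma D_Lf N d delta (f f' : R -> R) (x v : R -> nat -> Vec) t :
  (forall i k, (i < N)%nat -> (k < d)%nat -> derivable_pt_lim (fun s => x s i k) t (v t i k)) ->
  0 <= delta -> collisionless N d delta (x t) ->
  (forall s, 0 < s -> derivable_pt_lim f s (f' s)) ->
  derivable_pt_lim (fun s => Lf N d delta f (x s)) t
    (/ (INR N * INR (N - 1)) * fsum N (fun i => fsum N (fun j => if Nat.eq_dec i j then 0 else
      f' (Defs.dist d (x t i) (x t j) - delta) * rdot d (x t) (v t) i j))).
Proof.
  intros Hx Hd Hc Hf. unfold Lf. apply D_cmul. apply D_fsum. intros i Hi. apply D_fsum. intros j Hj.
  destruct (Nat.eq_dec i j). apply D_const.
  assert (Hr : Defs.dist d (x t i) (x t j) > delta) by (apply Hc; auto).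
  apply (D_eql _ _ (f' (Defs.dist d (x t i) (x t j) - delta) * (rdot d (x t) (v t) i j - 0))).
  ring.
  apply (D_comp (fun s => Defs.dist d (x s i) (x s j) - delta) f).
  - apply D_minus. apply D_dist with N; auto; lra. apply D_const.
  - apply Hf. lra.
Qed.


Lemma cont_eps f t0 : (forall eps, 0 < eps -> exists del, 0 < del /\
  forall s, Rabs (s - t0) < del -> Rabs (f s - f t0) < eps) -> continuity_pt f t0.
Proof.
  intros H. unfold continuity_pt, continue_in, limit1_in, limit_in. simpl. unfold R_dist.
  intros eps He. destruct (H eps He) as [del [Hd Hs]]. exists del. split; auto.
  intros s [_ Hs']. apply Hs; auto. Qed.

Lemma cont_eps_inv f t0 : continuity_pt f t0 -> forall eps, 0 < eps -> exists del, 0 < del /\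
  forall s, Rabs (s - t0) < del -> Rabs (f s - f t0) < eps.
Proof.
  unfold continuity_pt, continue_in, limit1_in, limit_in. simpl. unfold R_dist.
  intros H eps He. destruct (H eps He) as [del [Hd Hs]]. exists del. split; auto.
  intros s Hs'. destruct (Req_dec s t0). subst. rewrite Rminus_diag, Rabs_R0; auto.
  apply Hs. split; auto. unfold D_x, no_cond. auto. Qed.

Lemma Rmax0_pos s : 0 <= s -> Rmax 0 s = s.
Proof. intros; unfold Rmax; destruct (Rle_dec 0 s); lra. Qed.

Lemma Rmax0_bnd s : 0 <= Rmax 0 s <= Rabs s.
Proof. unfold Rmax; destruct (Rle_dec 0 s); split_Rabs; lra. Qed.

Lemma C_rmax (y : R -> R) t0 : right_continuous_at y 0 -> (forall t, 0 < t -> continuity_pt y t) ->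
  0 <= t0 -> continuity_pt (fun s => y (Rmax 0 s)) t0.
Proof.
  intros Hr Hc Ht0. apply cont_eps. intros eps He.
  destruct (Req_dec t0 0) as [e|ne].
  - subst. destruct (Hr eps He) as [del [Hd Hs]]. exists del. split; auto.
    intros s Hs'. replace (Rmax 0 0) with 0 by (rewrite Rmax0_pos; lra). apply Hs.
    pose proof (Rmax0_bnd s). rewrite Rminus_0_r in Hs'. lra.
  - destruct (cont_eps_inv _ _ (Hc t0 ltac:(lra)) eps He) as [del [Hd Hs]].
    exists (Rmin del t0). split. apply Rmin_glb_lt; lra.
    intros s Hs'. assert (Rabs (s - t0) < del) by (apply Rlt_le_trans with (Rmin del t0); [exact Hs'|apply Rmin_l]).
    assert (Rabs (s - t0) < t0) by (apply Rlt_le_trans with (Rmin del t0); [exact Hs'|apply Rmin_r]).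
    rewrite !Rmax0_pos; [apply Hs; auto|lra|]. revert H0; split_Rabs; lra.
Qed.

Lemma C_ext f g t : (forall s, f s = g s) -> continuity_pt f t -> continuity_pt g t.
Proof. intros H. replace g with f; auto. apply functional_extensionality; auto. Qed.

Lemma C_dist N d (X : R -> nat -> Vec) t i j :
  (forall i k, (i < N)%nat -> (k < d)%nat -> continuity_pt (fun s => X s i k) t) ->
  (i < N)%nat -> (j < N)%nat -> continuity_pt (fun s => Defs.dist d (X s i) (X s j)) t.
Proof.
  intros H Hi Hj. unfold Defs.dist, norm.
  apply (C_comp (fun s => dot d (fun k => X s i k - X s j k) (fun k => X s i k - X s j k)) sqrt).
  - unfold dot. apply C_fsum. intros k Hk. apply C_mul; apply C_minus; apply H; auto.
  - apply continuity_pt_sqrt. apply dot_nonneg.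
Qed.

Lemma C_kin N d (V : R -> nat -> Vec) t :
  (forall i k, (i < N)%nat -> (k < d)%nat -> continuity_pt (fun s => V s i k) t) ->
  continuity_pt (fun s => kinetic N d (V s)) t.
Proof.
  intros H. apply (C_ext (fun s => fsum N (fun i => fsum d (fun k => V s i k * V s i k)))).
  { intros s. unfold kinetic. apply fsum_ext. intros. rewrite norm_sq. reflexivity. }
  apply C_fsum. intros i Hi. apply C_fsum. intros k Hk. apply C_mul; apply H; auto.
Qed.

Lemma C_Lf N d delta (f f' : R -> R) (X : R -> nat -> Vec) t :
  (forall i k, (i < N)%nat -> (k < d)%nat -> continuity_pt (fun s => X s i k) t) ->
  collisionless N d delta (X t) ->
  (forall s, 0 < s -> derivable_pt_lim f s (f' s)) ->
  continuity_pt (fun s => Lf N d delta f (X s)) t.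
Proof.
  intros H Hc Hf. unfold Lf. apply C_mul. apply C_const.
  apply C_fsum. intros i Hi. apply C_fsum. intros j Hj.
  destruct (Nat.eq_dec i j). apply C_const.
  apply (C_comp (fun s => Defs.dist d (X s i) (X s j) - delta) f).
  - apply C_minus. apply C_dist with N; auto. apply C_const.
  - apply derivable_continuous_pt. exists (f' (Defs.dist d (X t i) (X t j) - delta)).
    apply Hf. assert (Defs.dist d (X t i) (X t j) > delta) by (apply Hc; auto). lra.
Qed.


Lemma energy N d gamma C1 delta alpha Gamma x v (f f' : R -> R) A B T :
  (2 <= N)%nat -> Gamma_on_Rd d Gamma -> CS_A1 d Gamma -> 0 < C1 -> CS_A2 d Gamma gamma C1 ->
  0 <= delta -> CS_solution N d delta alpha Gamma x v -> 0 <= A ->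
  (forall s, 0 < s -> derivable_pt_lim f s (f' s)) ->
  (forall s w, 0 < s -> 0 <= w -> Rabs (f' s) * w <= A * (Rpower s (- alpha) * powR w (2 * gamma)) + B) ->
  (forall u, 0 <= u < T -> collisionless N d delta (x u)) ->
  forall t, 0 <= t < T ->
  Lf N d delta f (x t) + A / (C1 * (INR N - 1)) * kinetic N d (v t)
  <= B * t + (Lf N d delta f (x 0) + A / (C1 * (INR N - 1)) * kinetic N d (v 0)).
Proof.
  intros HN HR HA1 HC1 HA2 Hdel [Hcont Hode] HA Hf Hy Hcol t [Ht0 HtT].
  set (c := A / (C1 * (INR N - 1))).
  set (E := fun s => Lf N d delta f (x s) + c * kinetic N d (v s)).
  set (DE := fun s => / (INR N * INR (N - 1)) * fsum N (fun i => fsum N (fun j => if Nat.eq_dec i j then 0 else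
      f' (Defs.dist d (x s i) (x s j) - delta) * rdot d (x s) (v s) i j))
    + c * fsum N (fun i => fsum d (fun k => acc N d delta alpha Gamma (x s) (v s) i k * v s i k
        + v s i k * acc N d delta alpha Gamma (x s) (v s) i k))).
  assert (HD : forall s, 0 < s < T -> derivable_pt_lim E s (DE s)).
  { intros s Hs. assert (Hc : collisionless N d delta (x s)) by (apply Hcol; lra).
    unfold E, DE. apply D_plus.
    - apply D_Lf; auto. intros i k Hi Hk. assert (Hs0 : 0 < s) by lra. exact (proj1 (Hode s i k Hs0 Hc Hi Hk)).
    - apply D_cmul. apply D_kin. intros i k Hi Hk. assert (Hs0 : 0 < s) by lra. exact (proj2 (Hode s i k Hs0 Hc Hi Hk)). }
  assert (HDB : forall s, 0 < s < T -> DE s <= B).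
  { intros s Hs. unfold DE, c. apply (Dbound N d gamma C1 delta alpha Gamma f' A B (x s) (v s)); auto. apply Hcol; lra. }
  assert (Mono : forall a b, 0 < a -> a < b -> b < T -> E b - B * b <= E a - B * a).
  { intros a b Ha Hab Hb.
    destruct (MVT_cor2 (fun s => E s - B * s) (fun s => DE s - B * 1) a b Hab) as [c0 [Hc0 Hc0']].
    { intros c1 Hc1. apply D_minus. apply HD; lra. apply D_cmul. apply derivable_pt_lim_id. }
    assert (DE c0 <= B) by (apply HDB; lra).
    assert ((DE c0 - B * 1) * (b - a) <= 0).
    { assert (DE c0 - B * 1 <= 0) by lra. assert (0 < b - a) by lra.
      set (z := DE c0 - B * 1) in *. nra. }
    lra. }
  assert (R00 : Rmax 0 0 = 0) by (apply Rmax0_pos; lra).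
  assert (HX : forall i k, (i < N)%nat -> (k < d)%nat -> continuity_pt (fun s => x (Rmax 0 s) i k) 0).
  { intros i k Hi Hk. destruct (Hcont i k Hi Hk) as [H1 [H2 H3]].
    apply (C_rmax (fun s => x s i k)); auto. intros; apply H3; auto. lra. }
  assert (HV : forall i k, (i < N)%nat -> (k < d)%nat -> continuity_pt (fun s => v (Rmax 0 s) i k) 0).
  { intros i k Hi Hk. destruct (Hcont i k Hi Hk) as [H1 [H2 H3]].
    apply (C_rmax (fun s => v s i k)); auto. intros; apply H3; auto. lra. }
  assert (Cont : continuity_pt (fun s => E (Rmax 0 s) - B * s) 0).
  { unfold E. apply C_minus. apply C_plus.
    - apply (C_Lf N d delta f f' (fun s => x (Rmax 0 s))); auto. rewrite R00. apply Hcol; lra.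
    - apply C_mul. apply C_const. apply (C_kin N d (fun s => v (Rmax 0 s))); auto.
    - apply C_mul. apply C_const. apply derivable_continuous_pt, derivable_pt_id. }
  change (E t <= B * t + E 0).
  destruct (Req_dec t 0) as [e|ne]. { subst. lra. }
  destruct (Rle_lt_dec (E t - B * t) (E 0)) as [ok|bad]. lra. exfalso.
  destruct (cont_eps_inv _ _ Cont (E t - B * t - E 0) ltac:(lra)) as [del [Hdel' Hs]].
  set (a := Rmin (del / 2) (t / 2)).
  assert (Ha : 0 < a) by (apply Rmin_glb_lt; lra).
  assert (Ha2 : a <= t / 2) by apply Rmin_r.
  assert (Ha3 : a <= del / 2) by apply Rmin_l.
  specialize (Hs a). rewrite R00, Rmax0_pos in Hs by lra.
  assert (Rabs (a - 0) < del) by (rewrite Rminus_0_r, Rabs_right; lra).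
  specialize (Hs H). specialize (Mono a t Ha ltac:(lra) HtT).
  revert Hs; split_Rabs; lra.
Qed.


Lemma common_del n (P : nat -> R -> Prop) :
  (forall i del del', 0 < del' <= del -> P i del -> P i del') ->
  (forall i, (i < n)%nat -> exists del, 0 < del /\ P i del) ->
  exists del, 0 < del /\ forall i, (i < n)%nat -> P i del.
Proof.
  intros Hm. induction n; intros H.
  - exists 1. split. lra. intros; lia.
  - destruct IHn as [d1 [Hd1 H1]]. { intros; apply H; lia. }
    destruct (H n ltac:(lia)) as [d2 [Hd2 H2]].
    exists (Rmin d1 d2). split. apply Rmin_glb_lt; auto.
    intros i Hi. destruct (Nat.eq_dec i n).
    + subst. apply Hm with d2; auto. split. apply Rmin_glb_lt; auto. apply Rmin_r.
    + apply Hm with d1. split. apply Rmin_glb_lt; auto. apply Rmin_l. apply H1; lia.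
Qed.

Lemma Lf_term N d delta f X i j : (forall s, 0 < s -> 0 <= f s) -> collisionless N d delta X ->
  (i < N)%nat -> (j < N)%nat -> i <> j ->
  / (INR N * INR (N - 1)) * f (Defs.dist d (X i) (X j) - delta) <= Lf N d delta f X.
Proof.
  intros Hf Hc Hi Hj Hij. unfold Lf.
  assert (HT : forall i j, (i < N)%nat -> (j < N)%nat -> 0 <= (if Nat.eq_dec i j then 0 else f (Defs.dist d (X i) (X j) - delta))).
  { intros a b Ha Hb. destruct (Nat.eq_dec a b). lra. apply Hf.
    assert (Defs.dist d (X a) (X b) > delta) by (apply Hc; auto). lra. }
  assert (0 <= / (INR N * INR (N - 1))).
  { destruct (Nat.eq_dec N 0). lia. destruct (Nat.eq_dec N 1). lia.
    left. apply Rinv_0_lt_compat. apply Rmult_lt_0_compat; apply lt_0_INR; lia. }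
  apply Rmult_le_compat_l; auto.
  apply Rle_trans with (fsum N (fun j0 => if Nat.eq_dec i j0 then 0 else f (Defs.dist d (X i) (X j0) - delta))).
  - replace (f (Defs.dist d (X i) (X j) - delta)) with
      ((fun j0 => if Nat.eq_dec i j0 then 0 else f (Defs.dist d (X i) (X j0) - delta)) j).
    2:{ simpl. destruct (Nat.eq_dec i j); [lia|auto]. }
    apply (fsum_term N (fun j0 => if Nat.eq_dec i j0 then 0 else f (Defs.dist d (X i) (X j0) - delta)) j); auto.
  - apply (fsum_term N (fun i0 => fsum N (fun j0 => if Nat.eq_dec i0 j0 then 0 else f (Defs.dist d (X i0) (X j0) - delta)))); auto.
    intros k Hk. apply fsum_nonneg. intros; auto.
Qed.

Lemma nocoll N d delta (x v : R -> nat -> Vec) (f : R -> R) c B E0 :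
  (2 <= N)%nat -> 0 <= c -> collisionless N d delta (x 0) ->
  (forall i k, (i < N)%nat -> (k < d)%nat -> right_continuous_at (fun s => x s i k) 0 /\
      forall t, 0 < t -> continuity_pt (fun s => x s i k) t) ->
  (forall s, 0 < s -> 0 <= f s) ->
  (forall M, exists eta, 0 < eta /\ forall s, 0 < s < eta -> M < f s) ->
  (forall T, (forall u, 0 <= u < T -> collisionless N d delta (x u)) ->
     forall t, 0 <= t < T -> Lf N d delta f (x t) + c * kinetic N d (v t) <= B * t + E0) ->
  forall t, 0 <= t -> collisionless N d delta (x t).
Proof.
  intros HN Hc H0 Hcont Hf0 Hinf Hen.
  apply NNPP. intros Hneg. apply not_all_ex_not in Hneg. destruct Hneg as [t1 Ht1].
  apply imply_to_and in Ht1. destruct Ht1 as [Ht1 Hnc].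
  set (S := fun s => 0 <= s /\ forall u, 0 <= u <= s -> collisionless N d delta (x u)).
  assert (Hbd : bound S).
  { exists t1. intros s [Hs Hs']. destruct (Rle_lt_dec s t1); auto.
    exfalso. apply Hnc. apply Hs'. lra. }
  assert (S0 : S 0).
  { split. lra. intros u Hu. replace u with 0 by lra. auto. }
  destruct (completeness S Hbd (ex_intro _ 0 S0)) as [T [HTub HTl]].
  assert (HT0 : 0 <= T) by (apply HTub; auto).
  assert (Hbelow : forall u, 0 <= u < T -> collisionless N d delta (x u)).
  { intros u Hu. apply NNPP. intros Hn.
    assert (T <= u). { apply HTl. intros s [Hs Hs']. destruct (Rle_lt_dec s u); auto.
      exfalso. apply Hn. apply Hs'. lra. }
    lra. }
  assert (Cr : forall i j, (i < N)%nat -> (j < N)%nat ->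
     continuity_pt (fun s => Defs.dist d (x (Rmax 0 s) i) (x (Rmax 0 s) j)) T).
  { intros i j Hi Hj. apply (C_dist N d (fun s => x (Rmax 0 s))); auto.
    intros a k Ha Hk. destruct (Hcont a k Ha Hk) as [H1 H2].
    apply (C_rmax (fun s => x s a k)); auto. }
  assert (RT : Rmax 0 T = T) by (apply Rmax0_pos; lra).
  assert (HcT : collisionless N d delta (x T)).
  { destruct (Req_dec T 0) as [e|ne]. { rewrite e; auto. }
    intros i j Hi Hj Hij. apply Rnot_le_gt. intros Hle.
    set (K := / (INR N * INR (N - 1))).
    assert (HK : 0 < K).
    { unfold K. apply Rinv_0_lt_compat. apply Rmult_lt_0_compat; apply lt_0_INR; lia. }
    set (M := (Rabs B * T + Rabs E0) / K).
    destruct (Hinf M) as [eta [Heta Hf]].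
    destruct (cont_eps_inv _ _ (Cr i j Hi Hj) eta Heta) as [del [Hdel Hs]].
    set (t := Rmax 0 (T - del / 2)).
    assert (Htt : 0 <= t < T /\ Rabs (t - T) < del).
    { unfold t, Rmax. destruct (Rle_dec 0 (T - del / 2)); split; try split; try lra;
      rewrite Rabs_left by lra; lra. }
    destruct Htt as [Htt Htd].
    specialize (Hs t Htd). rewrite RT, (Rmax0_pos t) in Hs by lra.
    assert (Hct : collisionless N d delta (x t)) by (apply Hbelow; lra).
    assert (Hr : Defs.dist d (x t i) (x t j) > delta) by (apply Hct; auto).
    assert (Hlt : M < f (Defs.dist d (x t i) (x t j) - delta)).
    { apply Hf. split. lra. revert Hs; split_Rabs; lra. }
    assert (Hen' := Hen T Hbelow t Htt).
    assert (Hterm := Lf_term N d delta f (x t) i j Hf0 Hct Hi Hj Hij). fold K in Hterm.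
    assert (Hkin : 0 <= c * kinetic N d (v t)).
    { apply Rmult_le_pos; auto. unfold kinetic. apply fsum_nonneg. intros. apply pow2_ge_0. }
    assert (Hup : K * f (Defs.dist d (x t i) (x t j) - delta) <= Rabs B * T + Rabs E0).
    { assert (B * t <= Rabs B * T).
      { apply Rle_trans with (Rabs B * t). apply Rmult_le_compat_r; [lra|apply Rle_abs].
        apply Rmult_le_compat_l; [apply Rabs_pos|lra]. }
      pose proof (Rle_abs E0). lra. }
    assert (Hlo : K * M < K * f (Defs.dist d (x t i) (x t j) - delta)) by (apply Rmult_lt_compat_l; auto).
    unfold M in Hlo. replace (K * ((Rabs B * T + Rabs E0) / K)) with (Rabs B * T + Rabs E0) in Hlo
      by (field; lra). lra. }
  destruct (common_del N (fun i del => forall j, (j < N)%nat -> forall s, Rabs (s - T) < del -> i <> j ->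
      Defs.dist d (x (Rmax 0 s) i) (x (Rmax 0 s) j) > delta)) as [del [Hdel Hall]].
  { intros i del del' Hd Hp j Hj s Hs. apply Hp; auto. lra. }
  { intros i Hi.
    destruct (common_del N (fun j del => forall s, Rabs (s - T) < del -> i <> j ->
      Defs.dist d (x (Rmax 0 s) i) (x (Rmax 0 s) j) > delta)) as [del [Hdel Hall]].
    { intros j del del' Hd Hp s Hs. apply Hp. lra. }
    { intros j Hj. destruct (Nat.eq_dec i j) as [e|ne].
      - exists 1. split. lra. intros; contradiction.
      - assert (Hr : Defs.dist d (x T i) (x T j) > delta) by (apply HcT; auto).
        destruct (cont_eps_inv _ _ (Cr i j Hi Hj) (Defs.dist d (x T i) (x T j) - delta) ltac:(lra))
          as [del [Hdel Hs]].
        exists del. split; auto. intros s Hs' _. specialize (Hs s Hs'). rewrite RT in Hs.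
        revert Hs; split_Rabs; lra. }
    exists del. split; auto. }
  assert (S (T + del / 2)).
  { split. lra. intros u Hu. destruct (Rlt_le_dec u T). apply Hbelow; lra.
    intros i j Hi Hj Hij. assert (Hu' : Rabs (u - T) < del) by (rewrite Rabs_right; lra).
    pose proof (Hall i Hi j Hj u Hu' Hij). rewrite Rmax0_pos in H by lra. auto. }
  assert (T + del / 2 <= T) by (apply HTub; auto). lra.
Qed.


Lemma Y1 gamma s w : 1 / 2 < gamma -> 0 < s -> 0 <= w ->
  Rabs (/ s) * w <= / (2 * gamma) * (Rpower s (- (2 * gamma)) * powR w (2 * gamma)) + (2 * gamma - 1) / (2 * gamma).
Proof.
  intros Hg Hs Hw. rewrite Rabs_right by (left; apply Rinv_0_lt_compat; auto).
  pose proof (young_sw s w (2 * gamma) 1 Hs Hw ltac:(lra)).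
  rewrite Rpower_Ropp, Rpower_1, Rmult_1_r in H by auto. auto.
Qed.

Lemma Y2 gamma alpha s w : 1 / 2 < gamma -> 2 * gamma < alpha -> 0 < s -> 0 <= w ->
  let beta := alpha / (2 * gamma) - 1 in
  Rabs (- beta * Rpower s (- beta - 1)) * w <=
  beta / (2 * gamma) * (Rpower s (- alpha) * powR w (2 * gamma)) + (2 * gamma - 1) * beta / (2 * gamma).
Proof.
  intros Hg Ha Hs Hw beta.
  assert (Hb : 0 < beta).
  { unfold beta. apply Rlt_Rminus. apply Rmult_lt_reg_r with (2 * gamma); [lra|].
    unfold Rdiv. rewrite Rmult_assoc, Rinv_l, Rmult_1_r by lra. lra. }
  rewrite Rabs_mult, Rabs_left by lra. rewrite (Rabs_right (Rpower _ _)) by (left; apply Rpower_pos).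
  pose proof (young_sw s w (2 * gamma) (beta + 1) Hs Hw ltac:(lra)).
  replace (2 * gamma * (beta + 1)) with alpha in H by (unfold beta; field; lra).
  replace (- beta - 1) with (- (beta + 1)) by ring.
  apply Rmult_le_compat_l with (r := beta) in H; [|lra].
  replace (beta / (2 * gamma) * (Rpower s (- alpha) * powR w (2 * gamma)) + (2 * gamma - 1) * beta / (2 * gamma))
    with (beta * (/ (2 * gamma) * (Rpower s (- alpha) * powR w (2 * gamma)) + (2 * gamma - 1) / (2 * gamma)))
    by (field; lra).
  replace (- - beta * Rpower s (- (beta + 1)) * w) with (beta * (Rpower s (- (beta + 1)) * w)) by ring. auto.
Qed.

Lemma Y3 gamma s w : 1 / 2 < gamma -> 0 < s -> 0 <= w ->
  Rabs (/ (s + 1) - / s) * w <= / (2 * gamma) * (Rpower s (- (2 * gamma)) * powR w (2 * gamma)) + (2 * gamma - 1) / (2 * gamma).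
Proof.
  intros Hg Hs Hw. apply Rle_trans with (Rabs (/ s) * w); [|apply Y1; auto].
  apply Rmult_le_compat_r; auto.
  assert (/ (s + 1) < / s) by (apply Rinv_lt_contravar; nra).
  assert (0 < / (s + 1)) by (apply Rinv_0_lt_compat; lra).
  rewrite Rabs_left, Rabs_right by lra. lra.
Qed.

Lemma Df2 beta s : 0 < s -> derivable_pt_lim (fun s => Rpower s (- beta)) s (- beta * Rpower s (- beta - 1)).
Proof. intros; apply derivable_pt_lim_power; auto. Qed.

Lemma Df3 s : 0 < s -> derivable_pt_lim (fun s => ln (s + 1) - ln s) s (/ (s + 1) - / s).
Proof.
  intros Hs. apply D_minus; [|apply derivable_pt_lim_ln; auto].
  apply (D_eql _ _ (/ (s + 1) * (1 + 0))); [ring|].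
  apply (D_comp (fun s => s + 1) ln). apply D_plus. apply derivable_pt_lim_id. apply D_const.
  apply derivable_pt_lim_ln. lra.
Qed.

Lemma Inf2 beta : 0 < beta -> forall M, exists eta, 0 < eta /\ forall s, 0 < s < eta -> M < Rpower s (- beta).
Proof.
  intros Hb M. exists (Rpower (Rabs M + 1) (- / beta)). split. apply Rpower_pos.
  intros s [Hs Hse].
  assert (Rpower s beta < Rpower (Rpower (Rabs M + 1) (- / beta)) beta) by (apply Rlt_Rpower_l; lra).
  rewrite Rpower_mult in H. replace (- / beta * beta) with (- (1)) in H by (field; lra).
  rewrite Rpower_Ropp, Rpower_1 in H by (pose proof (Rabs_pos M); lra).
  rewrite Rpower_Ropp. pose proof (Rpower_pos s beta).
  apply Rinv_lt_contravar in H. rewrite Rinv_inv in H. pose proof (Rle_abs M). lra.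
  apply Rmult_lt_0_compat; auto. apply Rinv_0_lt_compat. pose proof (Rabs_pos M). lra.
Qed.

Lemma Inf3 : forall M, exists eta, 0 < eta /\ forall s, 0 < s < eta -> M < ln (s + 1) - ln s.
Proof.
  intros M. exists (exp (- M)). split. apply exp_pos. intros s [Hs Hse].
  assert (ln s < ln (exp (- M))) by (apply ln_increasing; auto). rewrite ln_exp in H.
  assert (ln 1 < ln (s + 1)) by (apply ln_increasing; lra). rewrite ln_1 in H0. lra.
Qed.

Lemma Pos3 s : 0 < s -> 0 <= ln (s + 1) - ln s.
Proof. intros. assert (ln s < ln (s + 1)) by (apply ln_increasing; lra). lra. Qed.


Theorem theorem2 (N d : nat) (gamma C1 delta alpha : R)
  (Gamma : Vec -> Vec) (x v : R -> nat -> Vec) :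
  (2 <= N)%nat ->
  1 / 2 < gamma < 3 / 2 ->
  Gamma_on_Rd d Gamma ->
  CS_A1 d Gamma ->
  0 < C1 -> CS_A2 d Gamma gamma C1 ->
  0 <= delta -> 2 * gamma <= alpha ->
  collisionless N d delta (x 0) ->
  CS_solution N d delta alpha Gamma x v ->
  (forall t, 0 <= t -> collisionless N d delta (x t)) /\
  (alpha = 2 * gamma -> forall t, 0 <= t ->
     L0 N d delta (x t) + 1 / (2 * C1 * gamma * (INR N - 1)) * kinetic N d (v t)
     <= (2 * gamma - 1) / (2 * gamma) * t + L0 N d delta (x 0)
        + 1 / (2 * C1 * gamma * (INR N - 1)) * kinetic N d (v 0)) /\
  (2 * gamma < alpha -> forall t, 0 <= t ->
     let beta := alpha / (2 * gamma) - 1 in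
     Lbeta N d delta beta (x t) + beta / (2 * C1 * gamma * (INR N - 1)) * kinetic N d (v t)
     <= (2 * gamma - 1) * beta / (2 * gamma) * t + Lbeta N d delta beta (x 0)
        + beta / (2 * C1 * gamma * (INR N - 1)) * kinetic N d (v 0)).
Proof.
  intros HN [Hg1 Hg2] HR HA1 HC1 HA2 Hdel Hal H0 Hsol.
  assert (HNr : 2 <= INR N) by (apply (le_INR 2); auto).
  assert (Hcx : forall i k, (i < N)%nat -> (k < d)%nat -> right_continuous_at (fun s => x s i k) 0 /\
      forall t, 0 < t -> continuity_pt (fun s => x s i k) t).
  { intros i k Hi Hk. destruct Hsol as [Hc _]. destruct (Hc i k Hi Hk) as [H1 [H2 H3]].
    split; auto. intros; apply H3; auto. }
  assert (Hbeta : 2 * gamma < alpha -> 0 < alpha / (2 * gamma) - 1).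
  { intros Ha. apply Rlt_0_minus. apply Rmult_lt_reg_r with (2 * gamma); [lra|].
    unfold Rdiv. rewrite Rmult_assoc, Rinv_l, Rmult_1_r by lra. lra. }
  assert (Hcpos : forall A, 0 <= A -> 0 <= A / (C1 * (INR N - 1))).
  { intros A HA. unfold Rdiv. apply Rmult_le_pos; auto. left; apply Rinv_0_lt_compat; nra. }
  assert (NC : forall t, 0 <= t -> collisionless N d delta (x t)).
  { destruct (Rle_lt_or_eq_dec _ _ Hal) as [Hlt|Heq].
    - set (beta := alpha / (2 * gamma) - 1).
      assert (Hb : 0 < beta) by (apply Hbeta; auto).
      apply (nocoll N d delta x v (fun s => Rpower s (- beta)) (beta / (2 * gamma) / (C1 * (INR N - 1)))
        ((2 * gamma - 1) * beta / (2 * gamma))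
        (Lf N d delta (fun s => Rpower s (- beta)) (x 0) + beta / (2 * gamma) / (C1 * (INR N - 1)) * kinetic N d (v 0)));
        auto.
      + apply Hcpos. unfold Rdiv; apply Rmult_le_pos; [lra|left; apply Rinv_0_lt_compat; lra].
      + intros; left; apply Rpower_pos.
      + apply Inf2; auto.
      + intros T HT t Ht.
        apply (energy N d gamma C1 delta alpha Gamma x v (fun s => Rpower s (- beta))
          (fun s => - beta * Rpower s (- beta - 1)) (beta / (2 * gamma)) ((2 * gamma - 1) * beta / (2 * gamma)) T); auto.
        * unfold Rdiv; apply Rmult_le_pos; [lra|left; apply Rinv_0_lt_compat; lra].
        * intros; apply Df2; auto.
        * intros s w Hs Hw. apply Y2; auto.
    - apply (nocoll N d delta x v (fun s => ln (s + 1) - ln s) (/ (2 * gamma) / (C1 * (INR N - 1)))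
        ((2 * gamma - 1) / (2 * gamma))
        (Lf N d delta (fun s => ln (s + 1) - ln s) (x 0) + / (2 * gamma) / (C1 * (INR N - 1)) * kinetic N d (v 0)));
        auto.
      + apply Hcpos. left; apply Rinv_0_lt_compat; lra.
      + intros; apply Pos3; auto.
      + apply Inf3.
      + intros T HT t Ht.
        apply (energy N d gamma C1 delta alpha Gamma x v (fun s => ln (s + 1) - ln s)
          (fun s => / (s + 1) - / s) (/ (2 * gamma)) ((2 * gamma - 1) / (2 * gamma)) T); auto.
        * left; apply Rinv_0_lt_compat; lra.
        * intros; apply Df3; auto.
        * intros s w Hs Hw. rewrite <- Heq. apply Y3; auto. }
  split; [exact NC|split].
  - intros Heq t Ht.
    pose proof (energy N d gamma C1 delta alpha Gamma x v ln (fun s => / s) (/ (2 * gamma))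
      ((2 * gamma - 1) / (2 * gamma)) (t + 1) ltac:(auto) HR HA1 HC1 HA2 Hdel Hsol
      ltac:(left; apply Rinv_0_lt_compat; lra) (fun s Hs => derivable_pt_lim_ln s Hs)
      ltac:(intros s w Hs Hw; rewrite Heq; apply Y1; auto)
      ltac:(intros u Hu; apply NC; lra) t ltac:(lra)) as HE.
    change (L0 N d delta (x t)) with (Lf N d delta ln (x t)).
    change (L0 N d delta (x 0)) with (Lf N d delta ln (x 0)).
    replace (1 / (2 * C1 * gamma * (INR N - 1))) with (/ (2 * gamma) / (C1 * (INR N - 1)))
      by (field; repeat split; lra).
    lra.
  - intros Hlt t Ht beta.
    assert (Hb : 0 < beta) by (apply Hbeta; auto).
    pose proof (energy N d gamma C1 delta alpha Gamma x v (fun s => Rpower s (- beta))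
      (fun s => - beta * Rpower s (- beta - 1)) (beta / (2 * gamma))
      ((2 * gamma - 1) * beta / (2 * gamma)) (t + 1) ltac:(auto) HR HA1 HC1 HA2 Hdel Hsol
      ltac:(unfold Rdiv; apply Rmult_le_pos; [lra|left; apply Rinv_0_lt_compat; lra])
      (fun s Hs => Df2 beta s Hs)
      ltac:(intros s w Hs Hw; apply Y2; auto)
      ltac:(intros u Hu; apply NC; lra) t ltac:(lra)) as HE.
    change (Lbeta N d delta beta (x t)) with (Lf N d delta (fun s => Rpower s (- beta)) (x t)).
    change (Lbeta N d delta beta (x 0)) with (Lf N d delta (fun s => Rpower s (- beta)) (x 0)).
    replace (beta / (2 * C1 * gamma * (INR N - 1))) with (beta / (2 * gamma) / (C1 * (INR N - 1)))
      by (field; repeat split; lra).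
    lra.
Qed.
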